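(* Let $0<\rho<\frac12$. There is no constant $C>0$ such that for all $t\ge1$ and all Schwartz functions $\varphi$ with $\hat\varphi$ compactly supported in $(0,\infty)$, $$\|\partial_x\varphi\|_{L^\infty}\le C\Big(t^{-1/2}\|x\partial_xU(-t)\varphi\|_{L^2}^{\frac12+\rho}\|U(-t)\varphi\|_{H^{\frac{2-2\rho}{1-2\rho}}}^{\frac12-\rho}+t^{-1/2}\|U(-t)\varphi\|_{H^{5/2}}\Big).$$ In particular, the inequality with $\|\langle i\partial_x\rangle\varphi\|_{L^\infty}$ on the left-hand side (as in Lemma 3.3 of Hayashi–Naumkin) fails as well.
   Context: $\partial_x^{-1}:=\mathcal F^{-1}\frac1{i\xi}\mathcal F$, and $U(t):=e^{t\partial_x^{-1}}$ is the Fourier multiplier with symbol $e^{t/(i\xi)}$ (the free propagator of $u_{tx}=u$). $\|f\|_{H^s}=\|\langle\xi\rangle^s\hat f\|_{L^2}$, $\langle\xi\rangle=(1+\xi^2)^{1/2}$. *)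

(* Defs.v *)
(* classical reals. Complex numbers are represented by pairs
   (real part, imaginary part) of real-valued functions. *)
From Stdlib Require Import Reals Lra ClassicalEpsilon.
Open Scope R_scope.

(* Riemann integral over [a,b] of f (value chosen classically; it is the
   RiemannInt whenever f is Riemann integrable, which is proof-independent). *)
Definition Rint (f : R -> R) (a b : R) : R :=
  epsilon (inhabits 0)
    (fun I => exists pr : Riemann_integrable f a b, RiemannInt pr = I).

(* D 0 is C^infinity, with D n its n-th derivative. *)
Definition smooth_tower (D : nat -> R -> R) : Prop :=
  forall (n : nat) (x : R), derivable_pt_lim (D n) x (D (S n) x).

Definition cmod (u v : R) : R := sqrt (u ^ 2 + v ^ 2).

Definition rpow (x y : R) : R := if Rle_dec x 0 then 0 else Rpower x y.

(* Inverse Fourier transform (1/2pi) int w(xi) e^{i x xi} dxi of a function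
   w = wr + i wi supported in [a,b]: real and imaginary parts. *)
Definition invF_re (a b : R) (wr wi : R -> R) (x : R) : R :=
  / (2 * PI) * Rint (fun xi => wr xi * cos (x * xi) - wi xi * sin (x * xi)) a b.
Definition invF_im (a b : R) (wr wi : R -> R) (x : R) : R :=
  / (2 * PI) * Rint (fun xi => wr xi * sin (x * xi) + wi xi * cos (x * xi)) a b.

(* Fourier transform of U(-t)phi: e^{-t/(i xi)} phihat(xi) = e^{i t/xi} phihat(xi) *)
Definition prop_re (t : R) (gr gi : R -> R) (xi : R) : R :=
  cos (t / xi) * gr xi - sin (t / xi) * gi xi.
Definition prop_im (t : R) (gr gi : R -> R) (xi : R) : R :=
  sin (t / xi) * gr xi + cos (t / xi) * gi xi.

(* H^s norm ||<xi>^s fhat||_{L^2} for fhat = fr + i fi supported in [a,b] *)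
Definition Hs_norm (a b s : R) (fr fi : R -> R) : R :=
  sqrt (Rint (fun xi => Rpower (1 + xi ^ 2) s * (fr xi ^ 2 + fi xi ^ 2)) a b).

(* Fourier-side L^2 norm (no normalisation) of hr + i hi on [a,b] *)
Definition L2_norm (a b : R) (hr hi : R -> R) : R :=
  sqrt (Rint (fun xi => hr xi ^ 2 + hi xi ^ 2) a b).

Definition jb (xi : R) : R := sqrt (1 + xi ^ 2).

(* Main.v *)
Require Import Defs.
From Stdlib Require Import Reals Lra Lia ClassicalEpsilon FunctionalExtensionality List.
From Coquelicot Require Import Coquelicot.
Open Scope R_scope.

Lemma is_derive_eq (f : R -> R) x l l' : is_derive f x l -> l = l' -> is_derive f x l'.
Proof. intros H ->; exact H. Qed.

Section FT.
Variable I : Type.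
Variable B : I -> R -> R.
Variable d : I -> list (R * I).
Fixpoint evl (l : list (R * I)) (x : R) : R :=
  match l with nil => 0 | (c, i) :: l' => c * B i x + evl l' x end.
Definition dl (l : list (R * I)) : list (R * I) :=
  flat_map (fun p => map (fun q => (fst p * fst q, snd q)) (d (snd p))) l.
Hypothesis Hd : forall i x, is_derive (B i) x (evl (d i) x).
Lemma evl_app l1 l2 x : evl (l1 ++ l2) x = evl l1 x + evl l2 x.
Proof. induction l1 as [|[c i] l IH]; simpl; [ring|rewrite IH; ring]. Qed.
Lemma evl_map c l x : evl (map (fun q => (c * fst q, snd q)) l) x = c * evl l x.
Proof. induction l as [|[c' i] l IH]; simpl; [ring|rewrite IH; ring]. Qed.
Lemma evl_der l x : is_derive (evl l) x (evl (dl l) x).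
Proof.
  induction l as [|[c i] l IH]; simpl.
  - apply (is_derive_const 0 x).
  - unfold dl in *. simpl. rewrite evl_app, evl_map.
    apply (is_derive_plus (fun x => c * B i x) (evl l)); auto.
    apply is_derive_scal; auto.
Qed.
Definition ftower (l0 : list (R * I)) (n : nat) : R -> R := evl (Nat.iter n dl l0).
Lemma ftower_smooth l0 : smooth_tower (ftower l0).
Proof. intros n x. apply is_derive_Reals. unfold ftower. simpl. apply evl_der. Qed.
End FT.

Definition E (k : nat) (x : R) : R := if Rlt_dec 0 x then exp (- / x) * (/ x) ^ k else 0.

Lemma exp_ge_id z : 0 <= z -> z <= exp z.
Proof.
  intros Hz. destruct (Req_dec z 0) as [->|Hn]. rewrite exp_0; lra.
  pose proof (exp_ineq1 z Hn); lra.
Qed.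

Lemma exp_pow_ge z m : 0 <= z -> z ^ m <= exp (INR m * z).
Proof.
  intros Hz. induction m as [|m IH].
  - simpl. rewrite Rmult_0_l, exp_0; lra.
  - rewrite S_INR. replace ((INR m + 1) * z) with (z + INR m * z) by ring.
    rewrite exp_plus. simpl. apply Rmult_le_compat; auto using pow_le.
    now apply exp_ge_id.
Qed.

Lemma E_quot_bound k h : 0 < h ->
  0 <= E k h / h <= (INR (S (S k))) ^ (S (S k)) * h.
Proof.
  intros Hh. unfold E. destruct (Rlt_dec 0 h) as [_|C]; [|lra].
  set (m := S (S k)).
  assert (Hm : 0 < INR m) by (apply lt_0_INR; unfold m; lia).
  set (y := / h).
  assert (Hy : 0 < y) by (unfold y; apply Rinv_0_lt_compat; lra).
  assert (Hq : exp (- y) * y ^ k / h = exp (- y) * y ^ (S k)).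
  { simpl. unfold y. field. lra. }
  rewrite Hq. split.
  - apply Rmult_le_pos; [left; apply exp_pos| apply pow_le; lra].
  - assert (Hb : (y / INR m) ^ m <= exp y).
    { pose proof (exp_pow_ge (y / INR m) m) as H.
      replace (INR m * (y / INR m)) with y in H by (field; lra).
      apply H. apply Rlt_le, Rdiv_lt_0_compat; lra. }
    assert (Hpos : 0 < (y / INR m) ^ m) by (apply pow_lt, Rdiv_lt_0_compat; lra).
    rewrite exp_Ropp.
    apply Rle_trans with (/ (y / INR m) ^ m * y ^ S k).
    + apply Rmult_le_compat_r; [apply pow_le; lra|].
      apply Rinv_le_contravar; [exact Hpos|exact Hb].
    + unfold m. rewrite <- pow_inv. 
      assert (Hm2 : INR (S (S k)) <> 0) by (apply not_0_INR; lia).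
      replace (/ (y / INR (S (S k)))) with (INR (S (S k)) * h) by (unfold y; field; split; [lra|exact Hm2]).
      rewrite Rpow_mult_distr. unfold y. rewrite pow_inv.
      simpl. replace (h * (h * h ^ k)) with (h * h * h^k) by ring.
      assert (0 < h^k) by (apply pow_lt; lra).
      right. field. lra.
Qed.

Definition dE (k : nat) : list (R * nat) := (- INR k, S k) :: (1, S (S k)) :: nil.

Lemma ball_R (x e y : R) : ball x e y -> Rabs (y - x) < e.
Proof. intros H. exact H. Qed.

Lemma E_der k x : is_derive (E k) x (evl nat E (dE k) x).
Proof.
  simpl. destruct (Rlt_dec 0 x) as [Hx|Hx].
  - apply (is_derive_ext_loc (fun z => exp (- / z) * (/ z) ^ k)).
    + exists (mkposreal x Hx). intros y Hy. apply ball_R in Hy. simpl in Hy.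
      unfold E. destruct (Rlt_dec 0 y) as [_|C]; [reflexivity|].
      apply Rabs_def2 in Hy; lra.
    + eapply is_derive_eq.
      { auto_derive; [split; lra | reflexivity]. }
      unfold E. destruct (Rlt_dec 0 x) as [_|C]; [|lra].
      destruct k as [|k]; simpl; field; lra.
  - destruct (Rlt_dec x 0) as [Hx'|Hx'].
    + apply (is_derive_ext_loc (fun _ => 0)).
      * exists (mkposreal (- x) ltac:(lra)). intros y Hy. apply ball_R in Hy. simpl in Hy.
        unfold E. destruct (Rlt_dec 0 y) as [C|_]; [|reflexivity].
        apply Rabs_def2 in Hy; lra.
      * eapply is_derive_eq. apply (is_derive_const 0 x).
        unfold E. destruct (Rlt_dec 0 x); [lra|]. simpl. unfold zero; simpl. ring.
    + assert (x = 0) by lra. subst x.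
      unfold E at 2 3. destruct (Rlt_dec 0 0) as [C|_]; [lra|].
      replace (- INR k * 0 + (1 * 0 + 0)) with 0 by ring.
      apply is_derive_Reals. intros eps Heps.
      set (K := INR (S (S k)) ^ S (S k)).
      assert (HK : 0 < K) by (apply pow_lt, lt_0_INR; lia).
      exists (mkposreal (eps / K) ltac:(apply Rdiv_lt_0_compat; lra)).
      intros h Hh0 Hh. simpl in Hh.
      rewrite Rplus_0_l. unfold E at 2. destruct (Rlt_dec 0 0) as [C|_]; [lra|].
      rewrite Rminus_0_r, Rminus_0_r.
      destruct (Rlt_dec 0 h) as [Hp|Hp].
      * pose proof (E_quot_bound k h Hp) as [B1 B2].
        rewrite Rabs_right by lra.
        apply Rle_lt_trans with (K * h); [exact B2|].
        rewrite Rabs_right in Hh by lra.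
        apply Rmult_lt_reg_l with (/ K). apply Rinv_0_lt_compat; lra.
        replace (/ K * (K * h)) with h by (field; lra).
        replace (/ K * eps) with (eps / K) by (field; lra). exact Hh.
      * unfold E. destruct (Rlt_dec 0 h); [lra|].
        unfold Rdiv. rewrite Rmult_0_l, Rabs_R0. exact Heps.
Qed.

Definition Etower := ftower nat E dE ((1, 0%nat) :: nil).
Lemma Etower_smooth : smooth_tower Etower.
Proof. apply ftower_smooth. intros; apply E_der. Qed.
Lemma Etower0 x : Etower 0 x = E 0 x.
Proof. unfold Etower, ftower. simpl. ring. Qed.

Lemma tower_der (F : nat -> R -> R) n x : smooth_tower F -> is_derive (F n) x (F (S n) x).
Proof. intros H. apply is_derive_Reals, H. Qed.

Ltac ad := eapply is_derive_eq; [auto_derive; try (exact I); try reflexivity | ].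

Definition ptower (F G : nat -> R -> R) : nat -> R -> R :=
  ftower (nat * nat) (fun p x => F (fst p) x * G (snd p) x)
    (fun p => (1, (S (fst p), snd p)) :: (1, (fst p, S (snd p))) :: nil) ((1, (0%nat, 0%nat)) :: nil).

Lemma ptower_smooth F G : smooth_tower F -> smooth_tower G -> smooth_tower (ptower F G).
Proof.
  intros HF HG. apply ftower_smooth. intros [i j] x. simpl.
  eapply is_derive_eq.
  - apply (is_derive_mult (fun x => F i x) (fun x => G j x)); try apply tower_der; auto.
    intros; apply Rmult_comm.
  - unfold plus, mult; simpl. ring.
Qed.
Lemma ptower0 F G x : ptower F G 0 x = F 0%nat x * G 0%nat x.
Proof. unfold ptower, ftower. simpl. ring. Qed.

Definition atower (s c : R) (F : nat -> R -> R) (n : nat) (x : R) : R := s ^ n * F n (s * x + c).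
Lemma atower_smooth s c F : smooth_tower F -> smooth_tower (atower s c F).
Proof.
  intros HF n x. apply is_derive_Reals. unfold atower.
  eapply is_derive_eq.
  - apply is_derive_scal.
    apply (is_derive_comp (F n) (fun x => s * x + c)).
    + apply tower_der; auto.
    + ad. reflexivity.
  - simpl. unfold scal; simpl. unfold mult; simpl. ring.
Qed.
Lemma atower0 s c F x : atower s c F 0 x = F 0%nat (s * x + c).
Proof. unfold atower. simpl. ring. Qed.

Definition trigB (a : R) (b : bool) (x : R) : R := if b then sin (a * x) else cos (a * x).
Definition trigD (a : R) (b : bool) : list (R * bool) :=
  if b then ((a, false) :: nil) else ((- a, true) :: nil).
Lemma trig_der a b x : is_derive (trigB a b) x (evl bool (trigB a) (trigD a b) x).
Proof.
  destruct b; simpl; unfold trigB.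
  - ad. simpl. ring.
  - ad. simpl. ring.
Qed.
Definition ctower a := ftower bool (trigB a) (trigD a) ((1, false) :: nil).
Definition stower a := ftower bool (trigB a) (trigD a) ((1, true) :: nil).
Lemma ctower_smooth a : smooth_tower (ctower a).
Proof. apply ftower_smooth. apply trig_der. Qed.
Lemma stower_smooth a : smooth_tower (stower a).
Proof. apply ftower_smooth. apply trig_der. Qed.
Lemma ctower0 a x : ctower a 0 x = cos (a * x).
Proof. unfold ctower, ftower; simpl; unfold trigB; ring. Qed.
Lemma stower0 a x : stower a 0 x = sin (a * x).
Proof. unfold stower, ftower; simpl; unfold trigB; ring. Qed.

Definition btower := ptower Etower (atower (-1) 1 Etower).
Lemma btower_smooth : smooth_tower btower.
Proof. apply ptower_smooth. apply Etower_smooth. apply atower_smooth, Etower_smooth. Qed.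
Lemma btower0 x : btower 0 x = E 0 x * E 0 (1 - x).
Proof. unfold btower. rewrite ptower0, atower0, !Etower0. f_equal. f_equal. ring. Qed.

Lemma Rint_eq f a b : ex_RInt f a b -> Rint f a b = RInt f a b.
Proof.
  intros H. pose proof (ex_RInt_Reals_0 f a b H) as pr.
  unfold Rint.
  assert (Hex : exists I, exists pr : Riemann_integrable f a b, RiemannInt pr = I)
    by (exists (RiemannInt pr); exists pr; reflexivity).
  destruct (epsilon_spec (inhabits 0) _ Hex) as [pr' Hpr'].
  rewrite <- Hpr'. symmetry. apply RInt_Reals.
Qed.

Lemma cont_ex_RInt f a b : (forall z, Rmin a b <= z <= Rmax a b -> continuity_pt f z) -> ex_RInt f a b.
Proof.
  intros H. apply (@ex_RInt_continuous R_CompleteNormedModule). intros z Hz. apply continuity_pt_filterlim, H, Hz.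
Qed.

Lemma sin_taylor1 y z : Rabs (sin (y + z) - sin y - z * cos y) <= z * z.
Proof.
  destruct (MVT_abs (fun s => sin (y + s) - sin y - s * cos y) (fun s => cos (y + s) - cos y) 0 z)
    as [c [Hc Hcr]].
  { intros c _. apply is_derive_Reals. ad. simpl. ring. }
  rewrite Rplus_0_r in Hc. replace (sin y - sin y - 0 * cos y) with 0 in Hc by ring.
  rewrite Rminus_0_r, Rminus_0_r in Hc. rewrite Hc.
  destruct (MVT_abs cos (fun s => - sin s) y (y + c)) as [e [He _]].
  { intros e _. apply is_derive_Reals, is_derive_cos. }
  rewrite He. replace (y + c - y) with c by ring.
  rewrite Rabs_Ropp.
  assert (Hs := Rabs_le (sin e) 1 (SIN_bound e)).
  assert (Hcz : Rabs c <= Rabs z).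
  { unfold Rmin, Rmax in Hcr. destruct (Rle_dec 0 z); unfold Rabs; destruct Rcase_abs; destruct Rcase_abs; lra. }
  apply Rle_trans with (1 * Rabs c * Rabs z).
  - apply Rmult_le_compat_r. apply Rabs_pos. apply Rmult_le_compat_r. apply Rabs_pos.
    destruct (SIN_bound e). unfold Rabs; destruct Rcase_abs; lra.
  - rewrite Rmult_1_l. apply Rle_trans with (Rabs z * Rabs z).
    apply Rmult_le_compat_r; [apply Rabs_pos|exact Hcz].
    rewrite <- Rabs_mult, Rabs_right; [lra| apply Rle_ge, Rle_0_sqr].
Qed.

Lemma cos_taylor1 y z : Rabs (cos (y + z) - cos y + z * sin y) <= z * z.
Proof.
  destruct (MVT_abs (fun s => cos (y + s) - cos y + s * sin y) (fun s => - sin (y + s) + sin y) 0 z)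
    as [c [Hc Hcr]].
  { intros c _. apply is_derive_Reals. ad. simpl. ring. }
  rewrite Rplus_0_r in Hc. replace (cos y - cos y + 0 * sin y) with 0 in Hc by ring.
  rewrite Rminus_0_r, Rminus_0_r in Hc. rewrite Hc.
  replace (- sin (y + c) + sin y) with (- (sin (y + c) - sin y)) by ring.
  rewrite Rabs_Ropp.
  destruct (MVT_abs sin cos y (y + c)) as [e [He _]].
  { intros e _. apply is_derive_Reals, is_derive_sin. }
  rewrite He. replace (y + c - y) with c by ring.
  assert (Hcz : Rabs c <= Rabs z).
  { unfold Rmin, Rmax in Hcr. destruct (Rle_dec 0 z); unfold Rabs; destruct Rcase_abs; destruct Rcase_abs; lra. }
  apply Rle_trans with (1 * Rabs c * Rabs z).
  - apply Rmult_le_compat_r. apply Rabs_pos. apply Rmult_le_compat_r. apply Rabs_pos.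
    destruct (COS_bound e). unfold Rabs; destruct Rcase_abs; lra.
  - rewrite Rmult_1_l. apply Rle_trans with (Rabs z * Rabs z).
    apply Rmult_le_compat_r; [apply Rabs_pos|exact Hcz].
    rewrite <- Rabs_mult, Rabs_right; [lra| apply Rle_ge, Rle_0_sqr].
Qed.

Lemma cont_of_der (f : R -> R) x : ex_derive f x -> continuity_pt f x.
Proof. intro H. apply continuity_pt_filterlim. exact (ex_derive_continuous (K:=R_AbsRing) (V:=R_NormedModule) f x H). Qed.

Lemma deriv_param (u v : R -> R) (A B x M : R) :
  0 < A < B -> (forall z, ex_derive u z) -> (forall z, ex_derive v z) ->
  (forall z, A <= z <= B -> Rabs (u z) + Rabs (v z) <= M) ->
  derivable_pt_lim (fun x => Rint (fun xi => u xi * cos (x * xi) - v xi * sin (x * xi)) A B) x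
     (Rint (fun xi => - (u xi * xi * sin (x * xi)) - v xi * xi * cos (x * xi)) A B).
Proof.
  intros HAB Hu Hv HM.
  assert (Hex : forall y, ex_RInt (fun xi => u xi * cos (y * xi) - v xi * sin (y * xi)) A B).
  { intros y. apply cont_ex_RInt. intros z _. apply cont_of_der. auto_derive. auto. }
  assert (Hex' : ex_RInt (fun xi => - (u xi * xi * sin (x * xi)) - v xi * xi * cos (x * xi)) A B).
  { apply cont_ex_RInt. intros z _. apply cont_of_der. auto_derive. auto. }
  assert (HM0 : 0 <= M).
  { apply Rle_trans with (Rabs (u A) + Rabs (v A)). pose proof (Rabs_pos (u A)); pose proof (Rabs_pos (v A)); lra. apply HM; lra. }
  intros eps Heps.
  set (K := (B - A) * M * (B * B)).
  assert (HK : 0 <= K) by (unfold K; apply Rmult_le_pos; [apply Rmult_le_pos; lra| nra]).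
  exists (mkposreal (eps / (K + 1)) ltac:(apply Rdiv_lt_0_compat; lra)).
  intros h Hh0 Hh. simpl in Hh.
  set (G := fun xi => u xi * (cos ((x + h) * xi) - cos (x * xi) + (h * xi) * sin (x * xi))
                    - v xi * (sin ((x + h) * xi) - sin (x * xi) - (h * xi) * cos (x * xi))).
  assert (HG : is_RInt G A B
     (minus (minus (RInt (fun xi => u xi * cos ((x + h) * xi) - v xi * sin ((x + h) * xi)) A B)
                   (RInt (fun xi => u xi * cos (x * xi) - v xi * sin (x * xi)) A B))
            (scal h (RInt (fun xi => - (u xi * xi * sin (x * xi)) - v xi * xi * cos (x * xi)) A B)))).
  { eapply (is_RInt_ext (V:=R_NormedModule)); [| apply (is_RInt_minus (V:=R_NormedModule)); [apply (is_RInt_minus (V:=R_NormedModule))|apply (is_RInt_scal (V:=R_NormedModule))];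
      apply (RInt_correct (V:=R_CompleteNormedModule)); auto].
    intros z _. unfold G, minus, plus, opp, scal; simpl. unfold mult; simpl. ring. }
  apply (is_RInt_unique (V:=R_CompleteNormedModule)) in HG.
  rewrite !Rint_eq by auto.
  unfold minus, plus, opp, scal in HG; simpl in HG. unfold mult in HG; simpl in HG.
  assert (Hbd : Rabs (RInt G A B) <= (B - A) * (M * (h * h * (B * B)))).
  { apply abs_RInt_le_const. lra.
    { apply cont_ex_RInt. intros z _. apply cont_of_der. unfold G. auto_derive. auto. }
    intros z Hz. unfold G.
    eapply Rle_trans. apply Rabs_triang. rewrite Rabs_Ropp, !Rabs_mult.
    pose proof (cos_taylor1 (x * z) (h * z)) as C1.
    pose proof (sin_taylor1 (x * z) (h * z)) as S1.
    replace (x * z + h * z) with ((x + h) * z) in C1, S1 by ring.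
    assert (Hz2 : h * z * (h * z) <= h * h * (B * B)).
    { replace (h * z * (h * z)) with (h * h * (z * z)) by ring.
      apply Rmult_le_compat_l. nra. nra. }
    pose proof (HM z Hz). pose proof (Rabs_pos (u z)). pose proof (Rabs_pos (v z)).
    apply Rle_trans with (Rabs (u z) * (h * h * (B * B)) + Rabs (v z) * (h * h * (B * B))).
    - apply Rplus_le_compat; apply Rmult_le_compat_l; auto; eapply Rle_trans; eauto.
    - assert (0 <= h * h * (B * B)) by nra. nra. }
  rewrite HG in Hbd.
  replace ((RInt (fun xi => u xi * cos ((x + h) * xi) - v xi * sin ((x + h) * xi)) A B -
            RInt (fun xi => u xi * cos (x * xi) - v xi * sin (x * xi)) A B) / h -
           RInt (fun xi => - (u xi * xi * sin (x * xi)) - v xi * xi * cos (x * xi)) A B)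
    with ((RInt (fun xi => u xi * cos ((x + h) * xi) - v xi * sin ((x + h) * xi)) A B +
      - RInt (fun xi => u xi * cos (x * xi) - v xi * sin (x * xi)) A B +
      - (h * RInt (fun xi => - (u xi * xi * sin (x * xi)) - v xi * xi * cos (x * xi)) A B)) / h)
    by (field; auto).
  unfold Rdiv. rewrite Rabs_mult, Rabs_inv.
  apply Rmult_lt_reg_r with (Rabs h). apply Rabs_pos_lt; auto.
  rewrite Rmult_assoc, Rinv_l by (apply Rabs_no_R0; auto). rewrite Rmult_1_r.
  eapply Rle_lt_trans. exact Hbd.
  replace ((B - A) * (M * (h * h * (B * B)))) with (K * (Rabs h * Rabs h))
    by (unfold K; rewrite <- Rabs_mult, Rabs_right; [ring| apply Rle_ge; nra]).
  assert (Hhp : 0 < Rabs h) by (apply Rabs_pos_lt; auto).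
  assert (Hk : K * Rabs h < eps).
  { apply Rle_lt_trans with (K * (eps / (K + 1))). apply Rmult_le_compat_l; lra.
    apply Rmult_lt_reg_r with (K + 1). lra. replace (K * (eps / (K + 1)) * (K + 1)) with (K * eps) by (field; lra). nra. }
  nra.
Qed.

Lemma E0_eq x : E 0 x = if Rlt_dec 0 x then exp (- / x) else 0.
Proof. unfold E. destruct Rlt_dec; simpl; ring. Qed.

Lemma E0_bounds x : 0 <= E 0 x <= 1.
Proof.
  rewrite E0_eq. destruct Rlt_dec as [H|H]; [|lra].
  split. left; apply exp_pos. rewrite <- exp_0. left. apply exp_increasing.
  assert (0 < / x) by (apply Rinv_0_lt_compat; lra). lra.
Qed.

Lemma beta_bounds y : 0 <= btower 0 y <= 1.
Proof.
  rewrite btower0. pose proof (E0_bounds y). pose proof (E0_bounds (1 - y)). split; nra.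
Qed.

Lemma beta_zero y : y <= 0 \/ 1 <= y -> btower 0 y = 0.
Proof.
  intros H. rewrite btower0, !E0_eq.
  destruct (Rlt_dec 0 y); destruct (Rlt_dec 0 (1 - y)); try ring. lra.
Qed.

Lemma beta_low y : 1/4 <= y <= 3/4 -> exp (-8) <= btower 0 y.
Proof.
  intros H. rewrite btower0, !E0_eq.
  destruct (Rlt_dec 0 y); [|lra]. destruct (Rlt_dec 0 (1 - y)); [|lra].
  replace (-8) with (-4 + -4) by ring. rewrite exp_plus.
  assert (exp (-4) <= exp (- / y)).
  { destruct (Req_dec y (1/4)). subst. replace (- / (1/4)) with (-4) by field. lra.
    left. apply exp_increasing. assert (/ y < 4).
    { replace 4 with (/ (1/4)) by field. apply Rinv_lt_contravar; lra. } lra. }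
  assert (exp (-4) <= exp (- / (1 - y))).
  { destruct (Req_dec y (3/4)). subst. replace (- / (1 - 3/4)) with (-4) by field. lra.
    left. apply exp_increasing. assert (/ (1 - y) < 4).
    { replace 4 with (/ (1/4)) by field. apply Rinv_lt_contravar; lra. } lra. }
  pose proof (exp_pos (-4)). apply Rmult_le_compat; lra.
Qed.

Lemma tower_cont (F : nat -> R -> R) n x : smooth_tower F -> continuity_pt (F n) x.
Proof. intros H. apply derivable_continuous_pt. exists (F (S n) x). apply H. Qed.

Lemma beta1_bound : exists M1, 0 <= M1 /\ forall y, 0 <= y <= 1 -> Rabs (btower 1 y) <= M1.
Proof.
  destruct (continuity_ab_maj (btower 1) 0 1) as [m1 [Hm1 _]]. lra.
  { intros c _. apply tower_cont, btower_smooth. }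
  destruct (continuity_ab_maj (fun y => - btower 1 y) 0 1) as [m2 [Hm2 _]]. lra.
  { intros c _. apply (continuity_pt_opp (btower 1)). apply tower_cont, btower_smooth. }
  exists (Rabs (btower 1 m1) + Rabs (btower 1 m2)). split.
  pose proof (Rabs_pos (btower 1 m1)); pose proof (Rabs_pos (btower 1 m2)); lra.
  intros y Hy. specialize (Hm1 y Hy). specialize (Hm2 y Hy). simpl in Hm2.
  pose proof (Rle_abs (btower 1 m1)). pose proof (Rabs_pos (btower 1 m2)).
  pose proof (Rle_abs (- btower 1 m2)). rewrite Rabs_Ropp in *.
  pose proof (Rabs_pos (btower 1 m1)).
  unfold Rabs at 1; destruct Rcase_abs; lra.
Qed.

Definition Psi (N : R) := atower N (- (N * N)) btower.
Lemma Psi_smooth N : smooth_tower (Psi N).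
Proof. apply atower_smooth, btower_smooth. Qed.
Lemma Psi0 N x : Psi N 0 x = btower 0 (N * (x - N)).
Proof. unfold Psi. rewrite atower0. f_equal. ring. Qed.
Lemma Psi1 N x : Psi N 1 x = N * btower 1 (N * (x - N)).
Proof. unfold Psi, atower. simpl. rewrite Rmult_1_r. f_equal. f_equal. ring. Qed.

Lemma psi_zero N x : 0 < N -> x <= N \/ N + / N <= x -> Psi N 0 x = 0.
Proof.
  intros HN H. rewrite Psi0. apply beta_zero. destruct H as [H|H].
  - left. nra.
  - right. apply Rle_trans with (N * / N). rewrite Rinv_r; lra.
    apply Rmult_le_compat_l; lra.
Qed.

Lemma psi_bounds N x : 0 <= Psi N 0 x <= 1.
Proof. rewrite Psi0. apply beta_bounds. Qed.

Lemma psi_low N x : 0 < N -> N + / (4 * N) <= x <= N + 3 / (4 * N) -> exp (-8) <= Psi N 0 x.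
Proof.
  intros HN H. rewrite Psi0. apply beta_low.
  assert (E1 : N * (/ (4 * N)) = 1/4) by (field; lra).
  assert (E2 : N * (3 / (4 * N)) = 3/4) by (field; lra).
  split.
  - rewrite <- E1. apply Rmult_le_compat_l; lra.
  - rewrite <- E2. apply Rmult_le_compat_l; lra.
Qed.

Lemma Psi1_bound M1 N x : 0 < N -> (forall y, 0 <= y <= 1 -> Rabs (btower 1 y) <= M1) ->
  N <= x <= N + / N -> Rabs (Psi N 1 x) <= N * M1.
Proof.
  intros HN HM H. rewrite Psi1, Rabs_mult, Rabs_right by lra.
  apply Rmult_le_compat_l. lra. apply HM. split. nra.
  apply Rle_trans with (N * / N). apply Rmult_le_compat_l; lra. rewrite Rinv_r; lra.
Qed.

Definition grN (N : R) := ptower (Psi N) (ctower (N ^ 3)).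
Definition giN (N : R) := ptower (Psi N) (stower (N ^ 3)).
Lemma grN_smooth N : smooth_tower (grN N).
Proof. apply ptower_smooth. apply Psi_smooth. apply ctower_smooth. Qed.
Lemma giN_smooth N : smooth_tower (giN N).
Proof. apply ptower_smooth. apply Psi_smooth. apply stower_smooth. Qed.
Lemma grN0 N x : grN N 0 x = Psi N 0 x * cos (N ^ 3 * x).
Proof. unfold grN. rewrite ptower0, ctower0. reflexivity. Qed.
Lemma giN0 N x : giN N 0 x = Psi N 0 x * sin (N ^ 3 * x).
Proof. unfold giN. rewrite ptower0, stower0. reflexivity. Qed.

Lemma gen_der_c (t5 a3 : R) (f : R -> R) (f' : R) x : 0 < x -> is_derive f x f' ->
  is_derive (fun z => z * (f z * cos (t5 / z + a3 * z))) x
   ((f x + x * f') * cos (t5 / x + a3 * x) - x * f x * (a3 - t5 / (x * x)) * sin (t5 / x + a3 * x)).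
Proof.
  intros Hx Hf. ad. { repeat split; try (exists f'; exact Hf); lra. }
  replace (Derive (fun x0 => f x0) x) with f' by (symmetry; apply is_derive_unique; exact Hf).
  simpl. unfold Rdiv. field. lra.
Qed.
Lemma gen_der_s (t5 a3 : R) (f : R -> R) (f' : R) x : 0 < x -> is_derive f x f' ->
  is_derive (fun z => z * (f z * sin (t5 / z + a3 * z))) x
   ((f x + x * f') * sin (t5 / x + a3 * x) + x * f x * (a3 - t5 / (x * x)) * cos (t5 / x + a3 * x)).
Proof.
  intros Hx Hf. ad. { repeat split; try (exists f'; exact Hf); lra. }
  replace (Derive (fun x0 => f x0) x) with f' by (symmetry; apply is_derive_unique; exact Hf).
  simpl. unfold Rdiv. field. lra.
Qed.

Section Inst.
Variable N : R.
Hypothesis HN : 1 <= N.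

Definition Th (z : R) := N ^ 5 / z + N ^ 3 * z.
Definition Thd (z : R) := N ^ 3 - N ^ 5 / (z * z).

Lemma prop_re_eq z : prop_re (N ^ 5) (grN N 0) (giN N 0) z = Psi N 0 z * cos (Th z).
Proof. unfold prop_re, Th. rewrite grN0, giN0, cos_plus. ring. Qed.
Lemma prop_im_eq z : prop_im (N ^ 5) (grN N 0) (giN N 0) z = Psi N 0 z * sin (Th z).
Proof. unfold prop_im, Th. rewrite grN0, giN0, sin_plus. ring. Qed.

Definition Hr (z : R) := if Rlt_dec 0 z then
  (Psi N 0 z + z * Psi N 1 z) * cos (Th z) - z * Psi N 0 z * Thd z * sin (Th z) else 0.
Definition Hi (z : R) := if Rlt_dec 0 z then
  (Psi N 0 z + z * Psi N 1 z) * sin (Th z) + z * Psi N 0 z * Thd z * cos (Th z) else 0.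

Lemma Psi_ex_derive n z : ex_derive (Psi N n) z.
Proof. exists (Psi N (S n) z). apply tower_der, Psi_smooth. Qed.
Lemma Psi_Derive n z : Derive (Psi N n) z = Psi N (S n) z.
Proof. apply is_derive_unique, tower_der, Psi_smooth. Qed.

Lemma locally_zero_left (f : R -> R) x : x < N -> (forall y, y < N -> f y = 0) -> is_derive f x 0.
Proof.
  intros Hx Hf. apply (is_derive_ext_loc (fun _ => 0)).
  - exists (mkposreal (N - x) ltac:(lra)). intros y Hy. apply ball_R in Hy. simpl in Hy.
    symmetry. apply Hf. apply Rabs_def2 in Hy. lra.
  - apply (is_derive_const 0 x).
Qed.

Lemma Hr_der x : derivable_pt_lim (fun z => z * prop_re (N ^ 5) (grN N 0) (giN N 0) z) x (Hr x).
Proof.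
  apply is_derive_Reals. unfold Hr.
  destruct (Rlt_dec 0 x) as [Hx|Hx].
  - apply (is_derive_ext (fun z => z * (Psi N 0 z * cos (N ^ 5 / z + N ^ 3 * z)))).
    { intros z. rewrite prop_re_eq. reflexivity. }
    apply gen_der_c; auto. apply tower_der, Psi_smooth.
  - apply locally_zero_left. lra. intros y Hy. rewrite prop_re_eq, psi_zero by lra. ring.
Qed.

Lemma Hi_der x : derivable_pt_lim (fun z => z * prop_im (N ^ 5) (grN N 0) (giN N 0) z) x (Hi x).
Proof.
  apply is_derive_Reals. unfold Hi.
  destruct (Rlt_dec 0 x) as [Hx|Hx].
  - apply (is_derive_ext (fun z => z * (Psi N 0 z * sin (N ^ 5 / z + N ^ 3 * z)))).
    { intros z. rewrite prop_im_eq. reflexivity. }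
    apply gen_der_s; auto. apply tower_der, Psi_smooth.
  - apply locally_zero_left. lra. intros y Hy. rewrite prop_im_eq, psi_zero by lra. ring.
Qed.

Lemma N_pos : 0 < N.
Proof. lra. Qed.
Lemma invN_le : / N <= 1.
Proof. rewrite <- Rinv_1. apply Rinv_le_contravar; lra. Qed.
Lemma invN_pos : 0 < / N.
Proof. apply Rinv_0_lt_compat; lra. Qed.

Lemma z_le_2N z : z <= N + / N -> z <= 2 * N.
Proof. pose proof invN_le. lra. Qed.

Lemma Thd_bound z : N <= z <= N + / N -> 0 <= Thd z <= 3 * N.
Proof.
  intros [H1 H2]. pose proof invN_pos. pose proof invN_le.
  assert (Hz : 0 < z) by lra.
  assert (E : Thd z = N ^ 3 * (z * z - N * N) / (z * z)) by (unfold Thd; field; lra).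
  rewrite E.
  assert (Hd : 0 <= z * z - N * N) by nra.
  assert (Hd2 : z * z - N * N <= 3) .
  { replace (z * z - N * N) with ((z - N) * (z + N)) by ring.
    assert (z - N <= / N) by lra. assert (z + N <= 3 * N) by lra.
    apply Rle_trans with (/ N * (3 * N)). apply Rmult_le_compat; lra.
    right. field. lra. }
  split.
  - apply Rmult_le_pos. apply Rmult_le_pos; [apply pow_le; lra| lra].
    left; apply Rinv_0_lt_compat; nra.
  - unfold Rdiv. apply Rle_trans with (N ^ 3 * (z * z - N * N) * / (N * N)).
    + apply Rmult_le_compat_l. apply Rmult_le_pos; [apply pow_le; lra| lra].
      apply Rinv_le_contravar; nra.
    + replace (N ^ 3 * (z * z - N * N) * / (N * N)) with (N * (z * z - N * N)) by (field; lra).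
      nra.
Qed.

Lemma sq_le a c : Rabs a <= c -> a ^ 2 <= c ^ 2.
Proof. intros H. rewrite <- pow2_abs. apply pow_incr. split; [apply Rabs_pos|auto]. Qed.

Variable M1 : R.
Hypothesis HM1 : 0 <= M1 /\ forall y, 0 <= y <= 1 -> Rabs (btower 1 y) <= M1.

Definition KK := (1 + 2 * M1) ^ 2 + 36.

Lemma Hsq_bound z : N <= z <= N + / N -> Hr z ^ 2 + Hi z ^ 2 <= KK * N ^ 4.
Proof.
  intros Hz. pose proof (z_le_2N z (proj2 Hz)) as Hz2.
  assert (Hzp : 0 < z) by lra.
  unfold Hr, Hi. destruct (Rlt_dec 0 z) as [_|C]; [|lra].
  set (u := Psi N 0 z + z * Psi N 1 z). set (v := z * Psi N 0 z * Thd z).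
  assert (E : (u * cos (Th z) - v * sin (Th z)) ^ 2 + (u * sin (Th z) + v * cos (Th z)) ^ 2
             = u ^ 2 + v ^ 2).
  { pose proof (sin2_cos2 (Th z)). unfold Rsqr in H. nra. }
  rewrite E.
  pose proof (psi_bounds N z) as Hp.
  pose proof (Psi1_bound M1 N z N_pos (proj2 HM1) Hz) as Hp1.
  pose proof (Thd_bound z Hz) as Ht.
  destruct HM1 as [HM0 _].
  assert (Hu : Rabs u <= N ^ 2 * (1 + 2 * M1)).
  { unfold u. eapply Rle_trans. apply Rabs_triang. rewrite Rabs_mult.
    rewrite (Rabs_right z) by lra. rewrite Rabs_right by lra.
    apply Rle_trans with (1 + 2 * N * (N * M1)).
    - apply Rplus_le_compat. lra. apply Rmult_le_compat; try lra. apply Rabs_pos.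
    - assert (1 <= N ^ 2) by (simpl; nra). simpl. nra. }
  assert (Hv : Rabs v <= 6 * N ^ 2).
  { unfold v. rewrite !Rabs_mult, (Rabs_right z), (Rabs_right (Psi N 0 z)), (Rabs_right (Thd z)) by lra.
    apply Rle_trans with (2 * N * 1 * (3 * N)).
    apply Rmult_le_compat. nra. lra. apply Rmult_le_compat; lra. lra.
    simpl. nra. }
  apply sq_le in Hu. apply sq_le in Hv. unfold KK.
  replace ((N ^ 2 * (1 + 2 * M1)) ^ 2) with ((1 + 2 * M1) ^ 2 * N ^ 4) in Hu by ring.
  replace ((6 * N ^ 2) ^ 2) with (36 * N ^ 4) in Hv by ring.
  lra.
Qed.

Lemma Hsq_ex : ex_RInt (fun xi => Hr xi ^ 2 + Hi xi ^ 2) N (N + / N).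
Proof.
  pose proof invN_pos.
  apply (ex_RInt_ext (V:=R_NormedModule) (fun z =>
    ((Psi N 0 z + z * Psi N 1 z) * cos (N ^ 5 / z + N ^ 3 * z) - z * Psi N 0 z * (N ^ 3 - N ^ 5 / (z * z)) * sin (N ^ 5 / z + N ^ 3 * z)) ^ 2 +
    ((Psi N 0 z + z * Psi N 1 z) * sin (N ^ 5 / z + N ^ 3 * z) + z * Psi N 0 z * (N ^ 3 - N ^ 5 / (z * z)) * cos (N ^ 5 / z + N ^ 3 * z)) ^ 2)).
  { intros z Hz. rewrite Rmin_left, Rmax_right in Hz by lra.
    unfold Hr, Hi, Th, Thd. destruct (Rlt_dec 0 z); [reflexivity|lra]. }
  apply cont_ex_RInt. intros z Hz. rewrite Rmin_left, Rmax_right in Hz by lra.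
  apply cont_of_der. auto_derive. repeat split; try apply Psi_ex_derive; nra.
Qed.

Lemma L2_bound : L2_norm N (N + / N) Hr Hi <= sqrt (KK * N ^ 3).
Proof.
  pose proof invN_pos. unfold L2_norm. apply sqrt_le_1_alt.
  rewrite Rint_eq by apply Hsq_ex.
  apply Rle_trans with ((N + / N - N) * (KK * N ^ 4)).
  - eapply Rle_trans; [apply Rle_abs|]. apply abs_RInt_le_const. lra. apply Hsq_ex.
    intros z Hz. rewrite Rabs_right. apply Hsq_bound; auto.
    apply Rle_ge. pose proof (pow2_ge_0 (Hr z)); pose proof (pow2_ge_0 (Hi z)); lra.
  - right. field. lra.
Qed.

Lemma prop_sq z : prop_re (N ^ 5) (grN N 0) (giN N 0) z ^ 2 + prop_im (N ^ 5) (grN N 0) (giN N 0) z ^ 2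
   = Psi N 0 z ^ 2.
Proof.
  rewrite prop_re_eq, prop_im_eq. pose proof (sin2_cos2 (Th z)) as HH. unfold Rsqr in HH.
  replace ((Psi N 0 z * cos (Th z)) ^ 2 + (Psi N 0 z * sin (Th z)) ^ 2)
    with (Psi N 0 z ^ 2 * (sin (Th z) * sin (Th z) + cos (Th z) * cos (Th z))) by ring.
  rewrite HH. ring.
Qed.

Lemma Hs_bound s : 0 < s ->
  Hs_norm N (N + / N) s (prop_re (N ^ 5) (grN N 0) (giN N 0)) (prop_im (N ^ 5) (grN N 0) (giN N 0))
  <= sqrt (/ N * Rpower (5 * N ^ 2) s).
Proof.
  intros Hs. pose proof invN_pos. unfold Hs_norm. apply sqrt_le_1_alt.
  assert (Hex : ex_RInt (fun xi => Rpower (1 + xi ^ 2) s *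
      (prop_re (N ^ 5) (grN N 0) (giN N 0) xi ^ 2 + prop_im (N ^ 5) (grN N 0) (giN N 0) xi ^ 2)) N (N + / N)).
  { apply (ex_RInt_ext (V:=R_NormedModule) (fun xi => exp (s * ln (1 + xi ^ 2)) * Psi N 0 xi ^ 2)).
    { intros z _. rewrite prop_sq. reflexivity. }
    apply cont_ex_RInt. intros z Hz. apply cont_of_der. auto_derive.
    repeat split; try apply Psi_ex_derive. pose proof (pow2_ge_0 z); lra. }
  rewrite Rint_eq by exact Hex.
  apply Rle_trans with ((N + / N - N) * Rpower (5 * N ^ 2) s).
  - eapply Rle_trans; [apply Rle_abs|]. apply abs_RInt_le_const. lra. exact Hex.
    intros z Hz. rewrite prop_sq.
    pose proof (psi_bounds N z). pose proof (z_le_2N z (proj2 Hz)).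
    assert (Hp : 0 < Rpower (1 + z ^ 2) s) by (unfold Rpower; apply exp_pos).
    assert (Hq : Rpower (1 + z ^ 2) s <= Rpower (5 * N ^ 2) s).
    { apply Rle_Rpower_l. lra. split. pose proof (pow2_ge_0 z); lra. simpl. nra. }
    rewrite Rabs_right.
    + apply Rle_trans with (Rpower (1 + z ^ 2) s * 1); [|lra].
      apply Rmult_le_compat_l. lra. simpl. nra.
    + apply Rle_ge, Rmult_le_pos. lra. apply pow2_ge_0.
  - right. field. lra.
Qed.

Lemma lower_int f : (forall z, N <= z <= N + / N -> continuity_pt f z) ->
  (forall z, N <= z <= N + / N -> 0 <= f z) ->
  (forall z, N + / (4 * N) <= z <= N + 3 / (4 * N) -> N * exp (-8) <= f z) ->
  exp (-8) / 2 <= RInt f N (N + / N).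
Proof.
  intros Hc H0 H1. pose proof invN_pos.
  set (A1 := N + / (4 * N)). set (B1 := N + 3 / (4 * N)).
  assert (q : 0 < / (4 * N)) by (apply Rinv_0_lt_compat; lra).
  assert (E1 : / N = 4 * / (4 * N)) by (field; lra).
  assert (E3 : 3 / (4 * N) = 3 * / (4 * N)) by (unfold Rdiv; ring).
  assert (HA1 : N < A1) by (unfold A1; lra).
  assert (HAB : A1 < B1) by (unfold A1, B1; lra).
  assert (HB1 : B1 < N + / N) by (unfold B1; lra).
  assert (Hex : forall a b, N <= a -> a <= b -> b <= N + / N -> ex_RInt f a b).
  { intros a b Ha Hab Hb. apply cont_ex_RInt. intros z Hz. rewrite Rmin_left, Rmax_right in Hz by lra.
    apply Hc; lra. }
  rewrite <- (RInt_Chasles (V:=R_CompleteNormedModule) f N A1 (N + / N)) by (apply Hex; lra).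
  rewrite <- (RInt_Chasles (V:=R_CompleteNormedModule) f A1 B1 (N + / N)) by (apply Hex; lra).
  unfold plus; simpl.
  assert (P1 : 0 <= RInt f N A1) by (apply RInt_ge_0; [lra| apply Hex; lra| intros; apply H0; lra]).
  assert (P3 : 0 <= RInt f B1 (N + / N)) by (apply RInt_ge_0; [lra| apply Hex; lra| intros; apply H0; lra]).
  assert (P2 : (B1 - A1) * (N * exp (-8)) <= RInt f A1 B1).
  { replace ((B1 - A1) * (N * exp (-8))) with (RInt (fun _ => N * exp (-8)) A1 B1).
    apply RInt_le. lra. apply ex_RInt_const. apply Hex; lra. intros z Hz. apply H1. unfold A1, B1 in *; lra.
    rewrite RInt_const. reflexivity. }
  replace ((B1 - A1) * (N * exp (-8))) with (exp (-8) / 2) in P2 by (unfold A1, B1; field; lra).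
  lra.
Qed.
End Inst.

Lemma ln_le' x y : 0 < x -> x <= y -> ln x <= ln y.
Proof. intros Hx [H|H]. left; apply ln_increasing; auto. subst; lra. Qed.
Lemma exp_le' x y : x <= y -> exp x <= exp y.
Proof. intros [H|H]. left; apply exp_increasing; auto. subst; lra. Qed.

Lemma rpow_le x U p : 0 < p -> x <= exp U -> rpow x p <= exp (p * U).
Proof.
  intros Hp Hx. unfold rpow. destruct (Rle_dec x 0). left; apply exp_pos.
  unfold Rpower. apply exp_le'. apply Rmult_le_compat_l. lra.
  rewrite <- (ln_exp U). apply ln_le'; lra.
Qed.

Lemma rpow_nonneg x p : 0 <= rpow x p.
Proof. unfold rpow. destruct Rle_dec. lra. unfold Rpower. left; apply exp_pos. Qed.

Lemma sqrt_exp v : sqrt (exp v) = exp (v / 2).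
Proof.
  replace (exp v) with (exp (v / 2) * exp (v / 2)) by (rewrite <- exp_plus; f_equal; field).
  apply sqrt_square. left; apply exp_pos.
Qed.

Lemma pow_exp T k : exp T ^ k = exp (INR k * T).
Proof.
  induction k. simpl. rewrite Rmult_0_l, exp_0. reflexivity.
  rewrite S_INR. simpl. rewrite IHk, <- exp_plus. f_equal. ring.
Qed.

Section Final.
Variables rho C M1 : R.
Hypothesis hrho0 : 0 < rho.
Hypothesis hrho1 : rho < 1 / 2.
Hypothesis HC : 0 < C.
Hypothesis HM1 : 0 <= M1 /\ forall y, 0 <= y <= 1 -> Rabs (btower 1 y) <= M1.

Definition sexp := (2 - 2 * rho) / (1 - 2 * rho).

Definition RHS (N : R) :=
  C * ( / sqrt (N ^ 5)
               * rpow (/ sqrt (2 * PI) * L2_norm N (N + / N) (Hr N) (Hi N)) (1 / 2 + rho)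
               * rpow (Hs_norm N (N + / N) sexp
                         (prop_re (N ^ 5) (grN N 0) (giN N 0))
                         (prop_im (N ^ 5) (grN N 0) (giN N 0))) (1 / 2 - rho)
             + / sqrt (N ^ 5)
               * Hs_norm N (N + / N) (5 / 2)
                         (prop_re (N ^ 5) (grN N 0) (giN N 0))
                         (prop_im (N ^ 5) (grN N 0) (giN N 0))).

Lemma KK_pos : 0 < KK M1.
Proof. unfold KK. pose proof (pow2_ge_0 (1 + 2 * M1)). lra. Qed.

Lemma sexp_pos : 0 < sexp.
Proof. unfold sexp. apply Rdiv_lt_0_compat; lra. Qed.

Definition cst1 := (1 / 2 + rho) * (ln (KK M1) / 2) + (1 / 2 - rho) * (sexp * ln 5 / 2).
Definition cst2 := 5 / 4 * ln 5.

Lemma RHS_bound T : 0 <= T ->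
  RHS (exp T) <= C * (exp ((rho - 1) * T + cst1) + exp (- T / 2 + cst2)).
Proof.
  intros HT. set (N := exp T).
  assert (HN : 1 <= N) by (unfold N; rewrite <- exp_0; apply exp_le'; lra).
  assert (HNp : 0 < N) by lra.
  assert (Hs5 : / sqrt (N ^ 5) = exp (- (5 * T / 2))).
  { unfold N. rewrite pow_exp, sqrt_exp, exp_Ropp. f_equal. f_equal. simpl. field. }
  assert (Hln5N : ln (5 * N ^ 2) = ln 5 + 2 * T).
  { rewrite ln_mult by (try lra; apply pow_lt; lra). unfold N. rewrite pow_exp, ln_exp. simpl. ring. }
  assert (HsB : forall s, 0 < s -> Hs_norm N (N + / N) s (prop_re (N ^ 5) (grN N 0) (giN N 0))
                          (prop_im (N ^ 5) (grN N 0) (giN N 0)) <= exp ((- T + s * (ln 5 + 2 * T)) / 2)).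
  { intros s Hs. eapply Rle_trans. apply Hs_bound; auto.
    right. rewrite <- sqrt_exp. f_equal. unfold Rpower. rewrite Hln5N. unfold N.
    rewrite <- exp_Ropp, <- exp_plus. reflexivity. }
  assert (HX : / sqrt (2 * PI) * L2_norm N (N + / N) (Hr N) (Hi N) <= exp ((ln (KK M1) + 3 * T) / 2)).
  { assert (Hpi : 1 <= sqrt (2 * PI)).
    { rewrite <- sqrt_1. apply sqrt_le_1_alt. pose proof PI2_1. lra. }
    assert (Hi1 : / sqrt (2 * PI) <= 1) by (rewrite <- Rinv_1; apply Rinv_le_contravar; lra).
    assert (Hi0 : 0 < / sqrt (2 * PI)) by (apply Rinv_0_lt_compat; lra).
    assert (HL0 : 0 <= L2_norm N (N + / N) (Hr N) (Hi N)) by apply sqrt_pos.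
    apply Rle_trans with (L2_norm N (N + / N) (Hr N) (Hi N)).
    { apply Rle_trans with (1 * L2_norm N (N + / N) (Hr N) (Hi N)). apply Rmult_le_compat_r; lra. lra. }
    eapply Rle_trans. apply (L2_bound N HN M1 HM1).
    right. rewrite <- sqrt_exp. f_equal. rewrite exp_plus, exp_ln by apply KK_pos.
    unfold N. rewrite pow_exp. simpl. f_equal. f_equal. ring. }
  unfold RHS. fold N. rewrite Hs5.
  apply Rmult_le_compat_l. lra.
  apply Rplus_le_compat.
  - pose proof (rpow_le _ _ (1 / 2 + rho) ltac:(lra) HX) as R1.
    pose proof (rpow_le _ _ (1 / 2 - rho) ltac:(lra) (HsB sexp sexp_pos)) as R2.
    apply Rle_trans with (exp (- (5 * T / 2)) * exp ((1 / 2 + rho) * ((ln (KK M1) + 3 * T) / 2))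
                          * exp ((1 / 2 - rho) * ((- T + sexp * (ln 5 + 2 * T)) / 2))).
    + apply Rmult_le_compat. apply Rmult_le_pos. left; apply exp_pos. apply rpow_nonneg.
      apply rpow_nonneg. apply Rmult_le_compat_l. left; apply exp_pos. exact R1. exact R2.
    + right. rewrite <- !exp_plus. f_equal. unfold cst1.
      assert (Hse : (1 / 2 - rho) * sexp = 1 - rho) by (unfold sexp; field; lra).
      unfold sexp. field. lra.
  - apply Rle_trans with (exp (- (5 * T / 2)) * exp ((- T + 5 / 2 * (ln 5 + 2 * T)) / 2)).
    + apply Rmult_le_compat_l. left; apply exp_pos. apply HsB. lra.
    + right. rewrite <- exp_plus. f_equal. unfold cst2. field.
Qed.
End Final.

Lemma choose_T rho C a1 a2 : 0 < rho -> rho < 1/2 -> 0 < C ->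
  exists T, 0 <= T /\ C * (exp ((rho - 1) * T + a1) + exp (- T / 2 + a2)) < exp (-8) / (4 * PI).
Proof.
  intros h0 h1 HC. pose proof PI2_1 as Hpi.
  set (eps := exp (-8) / (8 * PI * C)).
  assert (He : 0 < eps) by (unfold eps; apply Rdiv_lt_0_compat; [apply exp_pos| nra]).
  set (L := ln eps).
  set (q := Rabs (a1 - L) / (1 - rho)). set (r := Rabs (a2 - L)).
  assert (Hq : q * (1 - rho) = Rabs (a1 - L)) by (unfold q; field; lra).
  assert (Hq0 : 0 <= q) by (unfold q; apply Rmult_le_pos; [apply Rabs_pos| left; apply Rinv_0_lt_compat; lra]).
  assert (Hr0 : 0 <= r) by apply Rabs_pos.
  exists (1 + q + 2 * r). split. lra.
  assert (E1 : exp ((rho - 1) * (1 + q + 2 * r) + a1) < eps).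
  { rewrite <- (exp_ln eps He). apply exp_increasing. fold L.
    pose proof (Rle_abs (a1 - L)). nra. }
  assert (E2 : exp (- (1 + q + 2 * r) / 2 + a2) < eps).
  { rewrite <- (exp_ln eps He). apply exp_increasing. fold L.
    pose proof (Rle_abs (a2 - L)). fold r in H. lra. }
  apply Rlt_le_trans with (C * (eps + eps)).
  apply Rmult_lt_compat_l; lra.
  right. unfold eps. field. split; lra.
Qed.

Lemma cmod_ge_r x y : 0 <= y -> y <= cmod x y.
Proof.
  intros Hy. unfold cmod. rewrite <- (sqrt_pow2 y Hy) at 1. apply sqrt_le_1_alt.
  pose proof (pow2_ge_0 x). lra.
Qed.
Lemma cmod_ge_l x y : 0 <= x -> x <= cmod x y.
Proof.
  intros Hx. unfold cmod. rewrite <- (sqrt_pow2 x Hx) at 1. apply sqrt_le_1_alt.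
  pose proof (pow2_ge_0 y). lra.
Qed.

Lemma supp N : 1 <= N -> forall xi, xi < N \/ N + / N < xi -> grN N 0 xi = 0 /\ giN N 0 xi = 0.
Proof.
  intros HN xi H. rewrite grN0, giN0, psi_zero. 2: lra. 2: (destruct H; [left|right]; lra).
  split; ring.
Qed.

Lemma gr_bound N xi : Rabs (grN N 0 xi) <= 1.
Proof.
  rewrite grN0, Rabs_mult. pose proof (psi_bounds N xi). pose proof (COS_bound (N ^ 3 * xi)).
  rewrite Rabs_right by lra. assert (Rabs (cos (N ^ 3 * xi)) <= 1) by (apply Rabs_le; lra). nra.
Qed.
Lemma gi_bound N xi : Rabs (giN N 0 xi) <= 1.
Proof.
  rewrite giN0, Rabs_mult. pose proof (psi_bounds N xi). pose proof (SIN_bound (N ^ 3 * xi)).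
  rewrite Rabs_right by lra. assert (Rabs (sin (N ^ 3 * xi)) <= 1) by (apply Rabs_le; lra). nra.
Qed.

Lemma gr_exd N z : ex_derive (grN N 0) z.
Proof. exists (grN N 1 z). apply tower_der, grN_smooth. Qed.
Lemma gi_exd N z : ex_derive (giN N 0) z.
Proof. exists (giN N 1 z). apply tower_der, giN_smooth. Qed.

Lemma lhs_lower N : 1 <= N -> forall f : R -> R,
  (forall z, ex_derive f z) -> (forall z, N <= z -> N <= f z) ->
  exp (-8) / (4 * PI) <= / (2 * PI) * Rint (fun xi => f xi * Psi N 0 xi) N (N + / N).
Proof.
  intros HN f Hf Hf2. pose proof PI2_1. pose proof invN_pos N HN.
  assert (Hc : forall z, continuity_pt (fun xi => f xi * Psi N 0 xi) z).
  { intros z. apply cont_of_der. auto_derive. split. apply Hf. split. apply Psi_ex_derive. exact I. }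
  rewrite Rint_eq by (apply cont_ex_RInt; auto).
  replace (exp (-8) / (4 * PI)) with (/ (2 * PI) * (exp (-8) / 2)) by (field; lra).
  apply Rmult_le_compat_l. left; apply Rinv_0_lt_compat; lra.
  apply lower_int; auto.
  - intros z Hz. pose proof (Hf2 z (proj1 Hz)). pose proof (psi_bounds N z). nra.
  - intros z Hz. assert (HNz : N <= z).
    { assert (0 < / (4 * N)) by (apply Rinv_0_lt_compat; lra). lra. }
    pose proof (Hf2 z HNz). pose proof (psi_low N z ltac:(lra) Hz). pose proof (exp_pos (-8)).
    apply Rmult_le_compat; lra.
Qed.

Theorem mainTheorem11 (rho : R) (hrho0 : 0 < rho) (hrho1 : rho < 1 / 2) :
  (~ exists C : R, 0 < C /\
     forall (t : R), 1 <= t ->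
     forall (gr gi : nat -> R -> R) (a b : R),
       0 < a -> a < b -> smooth_tower gr -> smooth_tower gi ->
       (forall xi, xi < a \/ b < xi -> gr 0%nat xi = 0 /\ gi 0%nat xi = 0) ->
     forall (Hr Hi : R -> R),
       (forall xi, derivable_pt_lim
          (fun z => z * prop_re t (gr 0%nat) (gi 0%nat) z) xi (Hr xi)) ->
       (forall xi, derivable_pt_lim
          (fun z => z * prop_im t (gr 0%nat) (gi 0%nat) z) xi (Hi xi)) ->
     forall (x dr di : R),
       derivable_pt_lim (invF_re a b (gr 0%nat) (gi 0%nat)) x dr ->
       derivable_pt_lim (invF_im a b (gr 0%nat) (gi 0%nat)) x di ->
       cmod dr di <=
       C * ( / sqrt t
               * rpow (/ sqrt (2 * PI) * L2_norm a b Hr Hi) (1 / 2 + rho)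
               * rpow (Hs_norm a b ((2 - 2 * rho) / (1 - 2 * rho))
                         (prop_re t (gr 0%nat) (gi 0%nat))
                         (prop_im t (gr 0%nat) (gi 0%nat))) (1 / 2 - rho)
             + / sqrt t
               * Hs_norm a b (5 / 2)
                         (prop_re t (gr 0%nat) (gi 0%nat))
                         (prop_im t (gr 0%nat) (gi 0%nat))))
  /\
  (~ exists C : R, 0 < C /\
     forall (t : R), 1 <= t ->
     forall (gr gi : nat -> R -> R) (a b : R),
       0 < a -> a < b -> smooth_tower gr -> smooth_tower gi ->
       (forall xi, xi < a \/ b < xi -> gr 0%nat xi = 0 /\ gi 0%nat xi = 0) ->
     forall (Hr Hi : R -> R),
       (forall xi, derivable_pt_lim
          (fun z => z * prop_re t (gr 0%nat) (gi 0%nat) z) xi (Hr xi)) ->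
       (forall xi, derivable_pt_lim
          (fun z => z * prop_im t (gr 0%nat) (gi 0%nat) z) xi (Hi xi)) ->
     forall (x : R),
       cmod (invF_re a b (fun xi => jb xi * gr 0%nat xi) (fun xi => jb xi * gi 0%nat xi) x)
            (invF_im a b (fun xi => jb xi * gr 0%nat xi) (fun xi => jb xi * gi 0%nat xi) x) <=
       C * ( / sqrt t
               * rpow (/ sqrt (2 * PI) * L2_norm a b Hr Hi) (1 / 2 + rho)
               * rpow (Hs_norm a b ((2 - 2 * rho) / (1 - 2 * rho))
                         (prop_re t (gr 0%nat) (gi 0%nat))
                         (prop_im t (gr 0%nat) (gi 0%nat))) (1 / 2 - rho)
             + / sqrt t
               * Hs_norm a b (5 / 2)
                         (prop_re t (gr 0%nat) (gi 0%nat))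
                         (prop_im t (gr 0%nat) (gi 0%nat)))).
Proof.
  destruct beta1_bound as [M1 HM1]. pose proof PI2_1 as Hpi.
  split; intros [C [HC H]];
  destruct (choose_T rho C (cst1 rho M1) cst2 hrho0 hrho1 HC) as [T [HT HTb]];
  pose proof (RHS_bound rho C M1 hrho0 hrho1 HC HM1 T HT) as HR;
  set (N := exp T) in *;
  assert (HN : 1 <= N) by (unfold N; rewrite <- exp_0; apply exp_le'; lra);
  assert (HNp : 0 < N) by lra;
  assert (HAB : N < N + / N) by (pose proof (invN_pos N HN); lra);
  assert (Ht1 : 1 <= N ^ 5) by (apply pow_R1_Rle; lra);
  set (x := - (N ^ 3)).
  - set (dr := / (2 * PI) * Rint (fun xi => - (grN N 0 xi * xi * sin (x * xi)) - giN N 0 xi * xi * cos (x * xi)) N (N + / N)).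
    set (di := / (2 * PI) * Rint (fun xi => - (giN N 0 xi * xi * sin (x * xi)) - (- grN N 0 xi) * xi * cos (x * xi)) N (N + / N)).
    assert (Hbd : forall z, N <= z <= N + / N -> Rabs (grN N 0 z) + Rabs (giN N 0 z) <= 2).
    { intros z _. pose proof (gr_bound N z). pose proof (gi_bound N z). lra. }
    assert (Hdr : derivable_pt_lim (invF_re N (N + / N) (grN N 0) (giN N 0)) x dr).
    { apply is_derive_Reals. unfold invF_re, dr.
      apply (is_derive_scal (fun x => Rint (fun xi => grN N 0 xi * cos (x * xi) - giN N 0 xi * sin (x * xi)) N (N + / N))).
      apply is_derive_Reals. apply (deriv_param (grN N 0) (giN N 0) N (N + / N) x 2).
      lra. apply gr_exd. apply gi_exd. exact Hbd. }
    assert (Hdi : derivable_pt_lim (invF_im N (N + / N) (grN N 0) (giN N 0)) x di).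
    { apply is_derive_Reals. unfold invF_im, di.
      apply (is_derive_ext (fun x => / (2 * PI) * Rint (fun xi => giN N 0 xi * cos (x * xi) - (- grN N 0 xi) * sin (x * xi)) N (N + / N))).
      { intros y. f_equal. f_equal. apply functional_extensionality. intros xi. ring. }
      apply (is_derive_scal (fun x => Rint (fun xi => giN N 0 xi * cos (x * xi) - (- grN N 0 xi) * sin (x * xi)) N (N + / N))).
      apply is_derive_Reals. apply (deriv_param (giN N 0) (fun z => - grN N 0 z) N (N + / N) x 2).
      lra. apply gi_exd. intros z. auto_derive. apply gr_exd.
      intros z Hz. rewrite Rabs_Ropp. pose proof (Hbd z Hz). lra. }
    pose proof (H (N ^ 5) Ht1 (grN N) (giN N) N (N + / N) HNp HAB (grN_smooth N) (giN_smooth N)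
                 (supp N HN) (Hr N) (Hi N) (Hr_der N HN) (Hi_der N HN) x dr di Hdr Hdi) as Hin.
    change (cmod dr di <= RHS rho C N) in Hin.
    assert (Edi : di = / (2 * PI) * Rint (fun xi => xi * Psi N 0 xi) N (N + / N)).
    { unfold di. f_equal. f_equal. apply functional_extensionality. intros xi.
      rewrite grN0, giN0. unfold x. replace (- N ^ 3 * xi) with (- (N ^ 3 * xi)) by ring.
      rewrite sin_neg, cos_neg. pose proof (sin2_cos2 (N ^ 3 * xi)) as HH. unfold Rsqr in HH.
      transitivity (xi * Psi N 0 xi * (sin (N ^ 3 * xi) * sin (N ^ 3 * xi) + cos (N ^ 3 * xi) * cos (N ^ 3 * xi))).
      ring. rewrite HH. ring. }
    assert (Hlow : exp (-8) / (4 * PI) <= di).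
    { rewrite Edi. apply (lhs_lower N HN (fun xi => xi)). intros; auto_derive; exact I. intros; lra. }
    assert (0 < exp (-8) / (4 * PI)) by (apply Rdiv_lt_0_compat; [apply exp_pos|lra]).
    pose proof (cmod_ge_r dr di ltac:(lra)). lra.
  - pose proof (H (N ^ 5) Ht1 (grN N) (giN N) N (N + / N) HNp HAB (grN_smooth N) (giN_smooth N)
                 (supp N HN) (Hr N) (Hi N) (Hr_der N HN) (Hi_der N HN) x) as Hin.
    change (cmod (invF_re N (N + / N) (fun xi => jb xi * grN N 0 xi) (fun xi => jb xi * giN N 0 xi) x)
                 (invF_im N (N + / N) (fun xi => jb xi * grN N 0 xi) (fun xi => jb xi * giN N 0 xi) x)
            <= RHS rho C N) in Hin.
    assert (Ere : invF_re N (N + / N) (fun xi => jb xi * grN N 0 xi) (fun xi => jb xi * giN N 0 xi) x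
                  = / (2 * PI) * Rint (fun xi => jb xi * Psi N 0 xi) N (N + / N)).
    { unfold invF_re. f_equal. f_equal. apply functional_extensionality. intros xi.
      rewrite grN0, giN0. unfold x. replace (- N ^ 3 * xi) with (- (N ^ 3 * xi)) by ring.
      rewrite sin_neg, cos_neg. pose proof (sin2_cos2 (N ^ 3 * xi)) as HH. unfold Rsqr in HH.
      transitivity (jb xi * Psi N 0 xi * (sin (N ^ 3 * xi) * sin (N ^ 3 * xi) + cos (N ^ 3 * xi) * cos (N ^ 3 * xi))).
      ring. rewrite HH. ring. }
    assert (Hlow : exp (-8) / (4 * PI) <= invF_re N (N + / N) (fun xi => jb xi * grN N 0 xi) (fun xi => jb xi * giN N 0 xi) x).
    { rewrite Ere. apply (lhs_lower N HN jb).
      - intros z. unfold jb. auto_derive. pose proof (pow2_ge_0 z). simpl in *. nra.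
      - intros z Hz. unfold jb. apply Rle_trans with z. lra.
        rewrite <- (sqrt_pow2 z) at 1 by lra. apply sqrt_le_1_alt. lra. }
    assert (0 < exp (-8) / (4 * PI)) by (apply Rdiv_lt_0_compat; [apply exp_pos|lra]).
    pose proof (cmod_ge_l (invF_re N (N + / N) (fun xi => jb xi * grN N 0 xi) (fun xi => jb xi * giN N 0 xi) x) (invF_im N (N + / N) (fun xi => jb xi * grN N 0 xi) (fun xi => jb xi * giN N 0 xi) x) ltac:(lra)). lra.
Qed.
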